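(* Let $d\ge1$, let $\pi_0,\pi_1,\dots$ be probability densities on $\mathbb{R}^d$, and for $t\ge1$ let $T_t$ be a Markov kernel on $\mathbb{R}^d$ with $\pi_t$ stationary, $m_t\ge1$ an integer and $Q_t=T_t^{m_t}$. Assume there exist a measurable $V:\mathbb{R}^d\to[1,\infty)$, a constant $C>0$ and $\rho_t\in(0,1)$ such that $\int V^2\pi_t\le C$ for all $t\ge0$ and $$\|T_t(x,\cdot)-\pi_t\|_V\le V(x)\rho_t\quad\text{for all }x\in\mathbb{R}^d,\ t\ge1 .$$ Let $\epsilon_t=\rho_t^{m_t}$ and $\alpha_t=2\sqrt{C}\,d_H(\pi_t,\pi_{t-1})$. Then for every $t\ge1$, $$\|Q_t\circ\cdots\circ Q_1\circ\pi_0-\pi_t\|_1\le\sum_{s=1}^t\Big\{\prod_{u=s}^t\epsilon_u\Big\}\alpha_s .$$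
   Context: $\|\mu\|_V=\sup_{|f|\le V}|\int f\,d\mu|$ for a signed measure $\mu$; $\|\cdot\|_1$ is the $L_1$ (total variation) norm. The Hellinger distance is $d_H(p,q)=\big(\int(\sqrt{p(x)}-\sqrt{q(x)})^2dx\big)^{1/2}$. $T^m$ is the $m$-step kernel and $K\circ p$ denotes the law $A\mapsto\int p(z)K(z,A)\,dz$; $Q_t\circ\cdots\circ Q_1\circ\pi_0$ is the law after running $m_s$ steps of $T_s$ in stages $s=1,\dots,t$ starting from $\pi_0$. *)

(* Defs.v *)
From HB Require Import structures.
From mathcomp Require Import all_boot all_order all_algebra.
From mathcomp Require Import all_classical all_reals all_analysis.
Set Implicit Arguments. Unset Strict Implicit. Unset Printing Implicit Defensive.
Import Order.TTheory GRing.Theory Num.Theory.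
Local Open Scope classical_set_scope.
Local Open Scope ring_scope.
Local Open Scope ereal_scope.

Section defs.
Context {dX : measure_display} {X : measurableType dX} {R : realType}.

Definition is_density (mu : {measure set X -> \bar R}) (p : X -> R) : Prop :=
  [/\ measurable_fun setT p, (forall x, 0 <= p x)%R
    & \int[mu]_x (p x)%:E = 1].

Definition dens_int (mu : {measure set X -> \bar R}) (p : X -> R)
  (f : X -> R) : \bar R := \int[mu]_x (f x * p x)%:E.

Definition ker_int (k : R.-ker X ~> X) (x : X) (f : X -> R) : \bar R :=
  \int[k x]_y (f y)%:E.

Definition Vnorm (E1 E2 : (X -> R) -> \bar R) (V : X -> R) : \bar R :=
  ereal_sup [set `|E1 f - E2 f| | f in
     [set f : X -> R | measurable_fun setT f /\ forall x, (`|f x| <= V x)%R]].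

Definition stationary (mu : {measure set X -> \bar R}) (k : R.-ker X ~> X)
  (p : X -> R) : Prop :=
  forall A, measurable A ->
    \int[mu]_x ((p x)%:E * k x A) = \int[mu]_(x in A) (p x)%:E.

Definition hellinger (mu : {measure set X -> \bar R}) (p q : X -> R) : R :=
  Num.sqrt (fine (\int[mu]_x (((Num.sqrt (p x) - Num.sqrt (q x)) ^+ 2)%R)%:E)).

Definition kop (k : R.-ker X ~> X) (f : X -> \bar R) : X -> \bar R :=
  fun x => \int[k x]_y f y.

Definition kpow (k : R.-ker X ~> X) (m : nat) (f : X -> \bar R) : X -> \bar R :=
  iter m (kop k) f.

(* Q_1 (Q_2 (... (Q_t f))) with Q_s = T_s^{m_s} *)
Fixpoint chain (T : nat -> R.-ker X ~> X) (m : nat -> nat) (t : nat)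
  (f : X -> \bar R) : X -> \bar R :=
  match t with
  | 0 => f
  | t'.+1 => chain T m t' (kpow (T t'.+1) (m t'.+1) f)
  end.

(* integration functional of the law Q_t o ... o Q_1 o pi_0 *)
Definition law_int (mu : {measure set X -> \bar R}) (p0 : X -> R)
  (T : nat -> R.-ker X ~> X) (m : nat -> nat) (t : nat) (f : X -> R) : \bar R :=
  \int[mu]_x ((p0 x)%:E * chain T m t (fun y => (f y)%:E) x).

End defs.

Definition box {R : realType} {d : nat} (a b : d.-tuple R) : set (d.-tuple R) :=
  [set x | forall i : 'I_d, (tnth a i < tnth x i <= tnth b i)%R].

(* mu is Lebesgue measure on R^d = d.-tuple R (product Borel sigma-algebra):
   it gives each box its volume; this determines it uniquely. *)
Definition is_lebesgue {R : realType} {d : nat}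
  (mu : {measure set (d.-tuple R) -> \bar R}) : Prop :=
  forall a b : d.-tuple R, (forall i, tnth a i <= tnth b i)%R ->
    mu (box a b) = (\prod_(i < d) (tnth b i - tnth a i))%:E.

(* Main.v *)
Require Import Defs.
From HB Require Import structures.
From mathcomp Require Import all_boot all_order all_algebra.
From mathcomp Require Import all_classical all_reals all_analysis.
From mathcomp Require Import measurable_realfun.
From mathcomp Require Import ring lra.
Import Order.TTheory GRing.Theory Num.Theory.
Local Open Scope classical_set_scope.
Local Open Scope ring_scope.
Set Implicit Arguments. Unset Strict Implicit. Unset Printing Implicit Defensive.
Lemma pw (R : realType) (v P Q l : R) : 0 <= v -> 0 <= P -> 0 <= Q -> 0 < l ->
  v * `|P - Q| <= l / 2 * (Num.sqrt P - Num.sqrt Q) ^+ 2 + l^-1 * (v ^+ 2 * P + v ^+ 2 * Q).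
Proof.
move=> v0 P0 Q0 l0.
have eP : P = Num.sqrt P ^+ 2 by rewrite sqr_sqrtr.
have eQ : Q = Num.sqrt Q ^+ 2 by rewrite sqr_sqrtr.
set a := Num.sqrt P in eP *; set b := Num.sqrt Q in eQ *.
have a0 : 0 <= a by exact: sqrtr_ge0.
have b0 : 0 <= b by exact: sqrtr_ge0.
have eD : `|P - Q| = `|a - b| * (a + b).
  by rewrite eP eQ subr_sqr normrM (ger0_norm (addr_ge0 a0 b0)) mulrC.
rewrite eD.
set u := `|a - b|.
have u2 : u ^+ 2 = (a - b) ^+ 2 by rewrite /u real_normK// num_real.
have u0 : 0 <= u by exact: normr_ge0.
rewrite -u2 eP eQ.
set w := v * (a + b).
have key : l * (v * (u * (a + b))) <= l * (l / 2 * u ^+ 2) + (v ^+ 2 * a ^+ 2 + v ^+ 2 * b ^+ 2).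
  have h1 : 0 <= (l * u - v * (a + b)) ^+ 2 by exact: sqr_ge0.
  have h2 : 0 <= v ^+ 2 * (a - b) ^+ 2 by rewrite mulr_ge0 ?sqr_ge0.
  nra.
have li : l * l^-1 = 1 by rewrite mulfV// gt_eqF.
have li2 : l * (l^-1 * (v ^+ 2 * a ^+ 2 + v ^+ 2 * b ^+ 2)) = v ^+ 2 * a ^+ 2 + v ^+ 2 * b ^+ 2.
  by rewrite mulrA li mul1r.
rewrite -(ler_pM2l l0) [X in _ <= X]mulrDr li2.
lra.
Qed.

Lemma opt (R : realType) (i H C : R) : 0 <= H -> 0 < C ->
  (forall l, 0 < l -> i <= l / 2 * H + l^-1 * (2 * C)) ->
  i <= 2 * Num.sqrt C * Num.sqrt H.
Proof.
move=> H0 C0 hl.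
have sC0 : 0 < Num.sqrt C by rewrite sqrtr_gt0.
have eC : C = Num.sqrt C ^+ 2 by rewrite sqr_sqrtr// ltW.
have [Hp|] := ltP 0 H.
  have sH0 : 0 < Num.sqrt H by rewrite sqrtr_gt0.
  have eH : H = Num.sqrt H ^+ 2 by rewrite sqr_sqrtr.
  have := hl (2 * Num.sqrt C / Num.sqrt H).
  rewrite mulr_gt0 ?invr_gt0 ?mulr_gt0// => /(_ isT).
  set a := Num.sqrt C in eC sC0 *; set b := Num.sqrt H in eH sH0 *.
  rewrite [in X in _ <= X -> _]eC [in X in _ <= X -> _]eH.
  have -> : 2 * a / b / 2 * b ^+ 2 + (2 * a / b)^-1 * (2 * a ^+ 2) = 2 * a * b.
    by field; rewrite ?gt_eqF.
  by [].
move=> Hle; have eH0 : H = 0 by apply/le_anti; rewrite Hle.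
rewrite eH0 sqrtr0 mulr0.
rewrite leNgt; apply/negP => ip.
have := hl (4 * C / i); rewrite mulr_gt0 ?invr_gt0 ?mulr_gt0// => /(_ isT).
rewrite eH0 mulr0 add0r.
have -> : (4 * C / i)^-1 * (2 * C) = i / 2 by field; rewrite ?gt_eqF.
lra.
Qed.

Section stat.
Local Open Scope ereal_scope.
Context d (X : measurableType d) (R : realType).
Variables (mu : {measure set X -> \bar R}) (k : R.-ker X ~> X) (p : X -> R).
Hypotheses (mp : measurable_fun setT p) (p0 : forall x, (0 <= p x)%R)
  (hs : stationary mu k p).

Import HBNNSimple.

Lemma stat_nnsfun (h : {nnsfun X >-> R}) :
  \int[mu]_x ((p x)%:E * \int[k x]_y (h y)%:E) = \int[mu]_x ((h x)%:E * (p x)%:E).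
Proof.
have mA r : measurable (h @^-1` [set r]).
  by rewrite -[X in measurable X]setTI; exact: measurable_funP.
have r0 r : r \in range h -> (0 <= r)%R.
  by rewrite inE => -[x _ <-].
have F0 x r : 0 <= r%:E * ((p x)%:E * k x (h @^-1` [set r])).
  have [rlt0|] := ltP r 0%R.
    by rewrite preimage_nnfun0// measure0 !mule0.
  by move=> rge0; rewrite mule_ge0 ?mule_ge0 ?lee_fin.
transitivity (\int[mu]_x (\sum_(r \in range h) (r%:E * ((p x)%:E * k x (h @^-1` [set r]))))).
  apply: eq_integral => x _; rewrite integralT_nnsfun sintegralE ge0_mule_fsumr.
    by apply: eq_fsbigr => r _; rewrite muleCA.
  move=> r; have [rlt0|rge0] := ltP r 0%R.
    by rewrite preimage_nnfun0// measure0 mule0.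
  by rewrite mule_ge0 ?mule_ge0 ?lee_fin.
rewrite ge0_integral_fsum//.
transitivity (\int[mu]_x (\sum_(r \in range h) (r%:E * ((\1_(h @^-1` [set r]) x)%:E * (p x)%:E)))); last first.
  apply: eq_integral => x _; rewrite [in RHS]fimfunE -fsumEFin//.
  rewrite ge0_mule_fsuml.
    by apply: eq_fsbigr => r _; rewrite EFinM muleA.
  by move=> r; rewrite nnfun_muleindic_ge0.
rewrite ge0_integral_fsum//; last 2 first.
  - move=> r; apply: measurable_funeM; apply: emeasurable_funM.
      apply/measurable_EFinP; exact: measurable_indic.
    exact/measurable_EFinP.
  - move=> r x _; have [rlt0|rge0] := ltP r 0%R.
      by rewrite preimage_nnfun0// indic0 mul0e mule0.
    by rewrite mule_ge0 ?mule_ge0 ?lee_fin.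
apply: eq_fsbigr => r /r0 rge0.
rewrite ge0_integralZl_EFin//; last 2 first.
  - by move=> x _; rewrite mule_ge0 ?lee_fin.
  - apply: emeasurable_funM; [exact/measurable_EFinP|exact: measurable_kernel].
rewrite ge0_integralZl_EFin//; last 2 first.
  - by move=> x _; rewrite mule_ge0 ?lee_fin.
  - by apply: emeasurable_funM; apply/measurable_EFinP =>//; exact: measurable_indic.
congr (_ * _); rewrite hs// integral_mkcond.
by apply: eq_integral => x _; rewrite /patch /indic; case: ifP; rewrite ?mul1e ?mul0e.
move=> r; apply: measurable_funeM; apply: emeasurable_funM.
  exact/measurable_EFinP.
exact: measurable_kernel.
Qed.

Lemma stat_ge0 (h : X -> \bar R) (mh : measurable_fun setT h) (h0 : forall x, 0 <= h x) :
  \int[mu]_x ((p x)%:E * \int[k x]_y h y) = \int[mu]_x (h x * (p x)%:E).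
Proof.
pose h_ := nnsfun_approx measurableT mh.
have hn x : h x = limn (fun n => (h_ n x)%:E).
  by apply/esym/cvg_lim => //; exact: cvg_nnsfun_approx.
have ndn x : {homo (fun n => (h_ n x)%:E) : n m / (n <= m)%N >-> n <= m}.
  by move=> a b ab; rewrite lee_fin; exact/lefP/nd_nnsfun_approx.
have mhn n : measurable_fun setT (fun x => (h_ n x)%:E) by exact/measurable_EFinP.
have kint x : \int[k x]_y h y = limn (fun n => \int[k x]_y (h_ n y)%:E).
  rewrite -monotone_convergence//; try by move=> y _; exact: ndn.
    by apply: eq_integral => y _; exact: hn.
  by move=> ? ? ?; rewrite lee_fin.
have kcvg z : cvgn (fun n => \int[k z]_y (h_ n y)%:E).
  apply/cvg_ex; eexists; apply: cvg_monotone_convergence => //.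
  by move=> ? ? ?; rewrite lee_fin.
transitivity (\int[mu]_x limn (fun n => (p x)%:E * \int[k x]_y (h_ n y)%:E)).
  by apply: eq_integral => x _; rewrite kint limeMl.
rewrite monotone_convergence//; last 3 first.
  - move=> n; apply: emeasurable_funM; first exact/measurable_EFinP.
    by apply: measurable_fun_integral_kernel => //; [exact: measurable_kernel|move=> y; rewrite lee_fin].
  - by move=> n x _; rewrite mule_ge0 ?lee_fin// integral_ge0// => y _; rewrite lee_fin.
  - move=> x _ a b ab; apply: lee_wpmul2l; first by rewrite lee_fin.
    apply: ge0_le_integral => //.
    all: try by move=> y _; rewrite lee_fin.
    by move=> y _; exact: ndn.
transitivity (limn (fun n => \int[mu]_x ((h_ n x)%:E * (p x)%:E))).
  by apply: congr_lim; apply/funext => n; exact: stat_nnsfun.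
rewrite -monotone_convergence//.
- apply: eq_integral => x _; rewrite muleC hn -limeMl//.
    by apply: congr_lim; apply/funext => n; rewrite muleC.
  by apply/cvg_ex; eexists; apply: ereal_nondecreasing_cvgn; exact: ndn.
- by move=> n; apply: emeasurable_funM => //; exact/measurable_EFinP.
- by move=> n x _; rewrite mule_ge0 ?lee_fin.
- by move=> x _ a b ab; apply: lee_wpmul2r; [rewrite lee_fin|exact: ndn].
Qed.
End stat.

Section main.
Local Open Scope ereal_scope.
Context d (X : measurableType d) (R : realType).
Variables (mu : {measure set X -> \bar R}) (pi : nat -> X -> R)
  (T : nat -> R.-pker X ~> X) (m : nat -> nat) (V : X -> R) (C : R)
  (rho : nat -> R).
Hypotheses (hpi : forall t, is_density mu (pi t))
  (hstat : forall t, (1 <= t)%N -> stationary mu (T t) (pi t))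
  (hVm : measurable_fun setT V) (hV1 : forall x, (1 <= V x)%R) (hC : (0 < C)%R)
  (hrho : forall t, (1 <= t)%N -> (0 < rho t < 1)%R)
  (hV2 : forall t, \int[mu]_x ((V x ^+ 2 * pi t x)%:E) <= C%:E)
  (hgeo : forall t x, (1 <= t)%N ->
     Vnorm (ker_int (T t) x) (dens_int mu (pi t)) V <= (V x * rho t)%:E).

Lemma V0 x : (0 <= V x)%R. Proof. exact: le_trans (hV1 x). Qed.
Lemma pi0 t x : (0 <= pi t x)%R. Proof. by case: (hpi t). Qed.
Lemma mpi t : measurable_fun setT (pi t). Proof. by case: (hpi t). Qed.
Lemma int_pi t : \int[mu]_x (pi t x)%:E = 1. Proof. by case: (hpi t). Qed.

Lemma int_Vp t : \int[mu]_x ((V x * pi t x)%:E) <= C%:E.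
Proof.
apply: le_trans (hV2 t); apply: ge0_le_integral.
- by [].
- by move=> x _; rewrite lee_fin mulr_ge0 ?V0 ?pi0.
- by apply/measurable_EFinP; apply: measurable_funM => //; exact: mpi.
- apply/measurable_EFinP; apply: measurable_funM; last exact: mpi.
  exact: measurable_funX.
- move=> x _; rewrite lee_fin ler_wpM2r ?pi0// expr2 ler_peMl ?V0//.
Qed.

Lemma integrable_Vp t (f : X -> \bar R) (K : R) : (0 <= K)%R ->
  measurable_fun setT f -> (forall x, `|f x| <= (K * (V x * pi t x))%:E) ->
  mu.-integrable setT f.
Proof.
move=> K0 mf hf; apply: (@le_integrable _ _ _ mu setT measurableT f (fun x => (K * (V x * pi t x))%:E) mf).
  by move=> x _; apply: le_trans (hf x) _; rewrite gee0_abs// lee_fin mulr_ge0// mulr_ge0 ?V0 ?pi0.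
apply/integrableP; split.
  by apply/measurable_EFinP; apply: measurable_funM => //; apply: measurable_funM => //; exact: mpi.
under eq_integral => x _ do rewrite gee0_abs ?lee_fin ?mulr_ge0 ?V0 ?pi0//.
rewrite (_ : (fun x => _) = (fun x => K%:E * (V x * pi t x)%:E)); last first.
  by apply/funext => x; rewrite EFinM.
rewrite ge0_integralZl_EFin//.
- apply: le_lt_trans (lee_wpmul2l _ (int_Vp t)) _; first by rewrite lee_fin.
  by rewrite -EFinM ltry.
- by move=> x _; rewrite lee_fin mulr_ge0 ?V0 ?pi0.
- by apply/measurable_EFinP; apply: measurable_funM => //; exact: mpi.
Qed.

Lemma abs_sub_le (a : \bar R) (b c : R) : `|a - b%:E| <= c%:E ->
  exists r, a = r%:E /\ (`|r - b| <= c)%R.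
Proof.
case: a => [r||] /=.
- by move=> h; exists r; split => //; rewrite -lee_fin.
- by rewrite leye_eq.
- by rewrite leye_eq.
Qed.

Lemma Vnorm_ub (E1 E2 : (X -> R) -> \bar R) (W : X -> R) (f : X -> R) : measurable_fun setT f ->
  (forall x, `|f x| <= W x)%R -> `|E1 f - E2 f| <= Vnorm E1 E2 W.
Proof. by move=> mf hf; apply: ereal_sup_ubound; exists f. Qed.

Lemma densV t : dens_int mu (pi t) V = (fine (dens_int mu (pi t) V))%:E /\
  (0 <= fine (dens_int mu (pi t) V) <= C)%R.
Proof.
have h0 : 0 <= dens_int mu (pi t) V.
  by apply: integral_ge0 => x _; rewrite lee_fin mulr_ge0 ?V0 ?pi0.
have h1 : dens_int mu (pi t) V <= C%:E by exact: int_Vp.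
have hf : dens_int mu (pi t) V \is a fin_num.
  by rewrite ge0_fin_numE// (le_lt_trans h1)// ltry.
split; first by rewrite fineK.
by apply/andP; split; rewrite -lee_fin fineK.
Qed.

Lemma kerV t x : (1 <= t)%N ->
  \int[T t x]_y (V y)%:E <= (V x * rho t + C)%:E.
Proof.
move=> t1.
have hVV y : (`|V y| <= V y)%R by rewrite ger0_norm ?V0.
have := le_trans (@Vnorm_ub (ker_int (T t) x) (dens_int mu (pi t)) V V hVm
  hVV) (hgeo x t1).
case: (densV t) => -> /andP[_ bC].
move=> /abs_sub_le [r [hk hr]]; rewrite /ker_int in hk; rewrite hk lee_fin.
move: hr; rewrite ler_norml => /andP[_ hr]; lra.
Qed.

Lemma kerV' t x : (1 <= t)%N ->
  \int[T t x]_y (V y)%:E <= ((1 + C) * V x)%:E.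
Proof.
move=> t1; apply: le_trans (kerV x t1) _; rewrite lee_fin.
have /andP[r0 r1] := hrho t1; have h1 := hV1 x; have h0 := V0 x.
have e1 : (V x * rho t <= V x)%R by nra.
have hC0 := hC.
have e2 : (C <= C * V x)%R by nra.
lra.
Qed.

Lemma integrable_kV t x (f : X -> \bar R) (K : R) : (1 <= t)%N -> (0 <= K)%R ->
  measurable_fun setT f -> (forall y, `|f y| <= (K * V y)%:E) ->
  (T t x).-integrable setT f.
Proof.
move=> t1 K0 mf hf.
apply: (@le_integrable _ _ _ (T t x) setT measurableT f (fun y => (K * V y)%:E) mf).
  by move=> y _; apply: le_trans (hf y) _; rewrite gee0_abs// lee_fin mulr_ge0 ?V0.
apply/integrableP; split.
  by apply/measurable_EFinP; apply: measurable_funM.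
under eq_integral => y _ do rewrite gee0_abs ?lee_fin ?mulr_ge0 ?V0//.
under eq_integral => y _ do rewrite EFinM.
rewrite ge0_integralZl_EFin//.
- apply: le_lt_trans (lee_wpmul2l _ (kerV' x t1)) _; first by rewrite lee_fin.
  by rewrite -EFinM ltry.
- by move=> y _; rewrite lee_fin V0.
- exact/measurable_EFinP.
Qed.

Definition kR t (h : X -> R) x : R := fine (\int[T t x]_y (h y)%:E).
Definition DR t (h : X -> R) : R := fine (dens_int mu (pi t) h).
Definition Vb (h : X -> R) (K : R) :=
  [/\ (0 <= K)%R, measurable_fun setT h & forall x, (`|h x| <= K * V x)%R].

Lemma integrable_kh t x h K : (1 <= t)%N -> Vb h K ->
  (T t x).-integrable setT (fun y => (h y)%:E).
Proof.
move=> t1 [K0 mh hh]; apply: (integrable_kV x t1 K0).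
  exact/measurable_EFinP.
by move=> y; rewrite /= lee_fin.
Qed.

Lemma integrable_ph t h K : Vb h K ->
  mu.-integrable setT (fun x => (h x * pi t x)%:E).
Proof.
move=> [K0 mh hh]; apply: (@integrable_Vp t _ K K0).
  by apply/measurable_EFinP; apply: measurable_funM => //; exact: mpi.
move=> x; rewrite /= lee_fin normrM (ger0_norm (pi0 t x)) mulrA.
by rewrite ler_wpM2r ?pi0 ?hh.
Qed.

Lemma ker_fin t x h K : (1 <= t)%N -> Vb h K ->
  \int[T t x]_y (h y)%:E = (kR t h x)%:E.
Proof.
by move=> t1 hb; rewrite /kR fineK//; apply: integrable_fin_num => //; exact: integrable_kh hb.
Qed.

Lemma dens_fin t h K : Vb h K -> dens_int mu (pi t) h = (DR t h)%:E.
Proof.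
by move=> hb; rewrite /DR fineK//; apply: integrable_fin_num => //; exact: integrable_ph hb.
Qed.

Lemma kR_bound t x h K : (1 <= t)%N -> Vb h K ->
  (`|kR t h x| <= K * (1 + C) * V x)%R.
Proof.
move=> t1 hb; case: (hb) => K0 mh hh.
rewrite -lee_fin -abse_EFin -(ker_fin x t1 hb).
apply: le_trans (le_abse_integral _ _ _) _ => //; first exact/measurable_EFinP.
apply: le_trans (@ge0_le_integral _ _ _ (T t x) setT measurableT _ (fun y => K%:E * (V y)%:E) _ _ _ _) _.
- by move=> y _.
- by apply: measurableT_comp => //; exact/measurable_EFinP.
- by apply: measurable_funeM; exact/measurable_EFinP.
- by move=> y _; rewrite /= -EFinM lee_fin.
rewrite ge0_integralZl_EFin//; last 2 first.
- by move=> y _; rewrite lee_fin V0.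
- exact/measurable_EFinP.
by rewrite -mulrA EFinM lee_wpmul2l ?lee_fin// kerV'.
Qed.

Lemma kR_meas t h K : (1 <= t)%N -> Vb h K -> measurable_fun setT (kR t h).
Proof.
move=> t1 [K0 mh hh].
have mI : measurable_fun setT (fun x => \int[T t x]_y (h y)%:E).
  have -> : (fun x => \int[T t x]_y (h y)%:E) = fun x => \int[T t x]_y ((EFin \o h)^\+ y) -
      \int[T t x]_y ((EFin \o h)^\- y) by apply/funext => x; rewrite integralE.
  have mEh : measurable_fun setT (EFin \o h) by exact/measurable_EFinP.
  apply: emeasurable_funB; apply: measurable_fun_integral_kernel.
  - exact: measurable_kernel.
  - by move=> y; exact: funepos_ge0.
  - exact: measurable_funepos.
  - exact: measurable_kernel.
  - by move=> y; exact: funeneg_ge0.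
  - exact: measurable_funeneg.
exact: (measurableT_comp (fine_measurable measurableT) mI).
Qed.

Lemma integrable_kcst t x (a : R) : (1 <= t)%N ->
  (T t x).-integrable setT (fun y => a%:E).
Proof.
move=> t1; apply: (@integrable_kV t x _ `|a| t1) => //.
by move=> y; rewrite /= lee_fin ler_peMr ?hV1.
Qed.

Lemma kR_lin t x h K (a b : R) : (1 <= t)%N -> Vb h K ->
  kR t (fun y => a + b * h y)%R x = (a + b * kR t h x)%R.
Proof.
move=> t1 hb; rewrite /kR.
rewrite (_ : \int[T t x]_y ((a + b * h y)%R)%:E = (a + b * kR t h x)%:E)//.
under eq_integral => y _ do rewrite EFinD EFinM.
rewrite integralD//; last 2 first.
- exact: integrable_kcst.
- by apply: integrableZl => //; exact: integrable_kh hb.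
rewrite integralZl//; last exact: integrable_kh hb.
rewrite (ker_fin x t1 hb) -EFinM.
rewrite (_ : \int[T t x]_y a%:E = a%:E) ?EFinD//.
by rewrite integral_cst// prob_kernel mule1.
Qed.

Lemma integrable_p t : mu.-integrable setT (fun x => (pi t x)%:E).
Proof.
apply: (@integrable_Vp t _ 1) => //.
  exact/measurable_EFinP/mpi.
move=> x; rewrite /= lee_fin mul1r ger0_norm ?pi0// ler_peMl ?pi0 ?hV1//.
Qed.

Lemma DR_lin t h K (a b : R) : Vb h K ->
  DR t (fun y => a + b * h y)%R = (a + b * DR t h)%R.
Proof.
move=> hb.
have E : \int[mu]_x (((a + b * h x) * pi t x)%R)%:E = (a + b * DR t h)%:E.
  under eq_integral => y _ do rewrite mulrDl -mulrA EFinD EFinM (EFinM b).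
  rewrite integralD//; last 2 first.
  - by apply: integrableZl => //; exact: integrable_p.
  - by apply: integrableZl => //; exact: integrable_ph hb.
  rewrite integralZl//; last exact: integrable_p.
  rewrite integralZl//; last exact: integrable_ph hb.
  have := dens_fin t hb; rewrite /dens_int => ->.
  by rewrite int_pi mule1 -EFinM -EFinD.
by rewrite /DR /dens_int E.
Qed.

Lemma Vb_kR t h K : (1 <= t)%N -> Vb h K -> Vb (kR t h) (K * (1 + C)).
Proof.
move=> t1 hb; case: (hb) => K0 _ _; split.
- by rewrite mulr_ge0// addr_ge0// ltW.
- exact: kR_meas hb.
- by move=> x; exact: kR_bound.
Qed.

Lemma kR2 t x h1 h2 K1 K2 (c : R) : (1 <= t)%N -> Vb h1 K1 -> Vb h2 K2 ->
  kR t (fun y => h1 y + c * h2 y)%R x = (kR t h1 x + c * kR t h2 x)%R.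
Proof.
move=> t1 hb1 hb2; rewrite /kR.
rewrite (_ : \int[T t x]_y ((h1 y + c * h2 y)%R)%:E = (kR t h1 x + c * kR t h2 x)%:E)//.
under eq_integral => y _ do rewrite EFinD EFinM.
rewrite integralD//; last 2 first.
- exact: integrable_kh hb1.
- by apply: integrableZl => //; exact: integrable_kh hb2.
rewrite integralZl//; last exact: integrable_kh hb2.
by rewrite (ker_fin x t1 hb1) (ker_fin x t1 hb2) -EFinM EFinD.
Qed.

Lemma DR2 t h1 h2 K1 K2 (c : R) : Vb h1 K1 -> Vb h2 K2 ->
  DR t (fun y => h1 y + c * h2 y)%R = (DR t h1 + c * DR t h2)%R.
Proof.
move=> hb1 hb2.
have E : \int[mu]_x (((h1 x + c * h2 x) * pi t x)%R)%:E = (DR t h1 + c * DR t h2)%:E.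
  under eq_integral => y _ do rewrite mulrDl -mulrA EFinD (EFinM c).
  rewrite integralD//; last 2 first.
  - exact: integrable_ph hb1.
  - by apply: integrableZl => //; exact: integrable_ph hb2.
  rewrite integralZl//; last exact: integrable_ph hb2.
  have := dens_fin t hb1; rewrite /dens_int => ->.
  have := dens_fin t hb2; rewrite /dens_int => ->.
  by rewrite -EFinM -EFinD.
by rewrite /DR /dens_int E.
Qed.

Lemma stat_nonneg t f K : (1 <= t)%N -> Vb f K -> (forall x, 0 <= f x)%R ->
  DR t (kR t f) = DR t f.
Proof.
move=> t1 hb f0; case: (hb) => K0 mf _.
have mEf : measurable_fun setT (fun y => (f y)%:E) by exact/measurable_EFinP.
have := @stat_ge0 _ _ _ mu (T t) (pi t) (mpi t) (pi0 t) (hstat t1)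
  (fun y => (f y)%:E) mEf (fun y => f0 y).
rewrite /DR /dens_int.
under eq_integral => x _ do rewrite (ker_fin x t1 hb) -EFinM mulrC.
by move=> ->; under eq_integral => x _ do rewrite -EFinM.
Qed.

Lemma stat_R t h K : (1 <= t)%N -> Vb h K -> DR t (kR t h) = DR t h.
Proof.
move=> t1 hb; case: (hb) => K0 mh hh.
have hbV : Vb V 1 by split => // x; rewrite mul1r ger0_norm ?V0.
pose f1 := fun y => (h y + K * V y)%R.
have hb1 : Vb f1 (K + K).
  split; first by rewrite addr_ge0.
  - by apply: measurable_funD => //; exact: measurable_funM.
  - move=> x; rewrite /f1 mulrDl; apply: le_trans (ler_normD _ _) _.
    by rewrite lerD// normrM (ger0_norm K0) ger0_norm ?V0.
have f10 x : (0 <= f1 x)%R.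
  rewrite /f1; have := hh x; rewrite ler_norml => /andP[? _]; lra.
have eh : h = (fun y => f1 y + (- K) * V y)%R.
  by apply/funext => y; rewrite /f1 mulNr addrK.
have ek : kR t h = (fun x => kR t f1 x + (- K) * kR t V x)%R.
  by apply/funext => x; rewrite {1}eh (kR2 _ _ t1 hb1 hbV).
rewrite ek (DR2 _ _ (Vb_kR t1 hb1) (Vb_kR t1 hbV)).
rewrite (stat_nonneg t1 hb1 f10) (stat_nonneg t1 hbV V0).
by rewrite [in RHS]eh (DR2 _ _ hb1 hbV).
Qed.

Lemma Vb_shift (h : X -> R) (a K : R) : (0 <= K)%R -> measurable_fun setT h ->
  (forall x, `|h x - a| <= K * V x)%R -> Vb h (`|a| + K).
Proof.
move=> K0 mh hh; split => //; first by rewrite addr_ge0.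
move=> x; rewrite mulrDl.
have -> : h x = (a + (h x - a))%R by rewrite addrC subrK.
apply: le_trans (ler_normD _ _) _; rewrite lerD ?hh//.
by rewrite ler_peMr ?hV1.
Qed.

Lemma OS t (h : X -> R) (a K : R) : (1 <= t)%N -> (0 < K)%R -> measurable_fun setT h ->
  (forall x, `|h x - a| <= K * V x)%R ->
  forall x, (`|kR t h x - DR t h| <= K * rho t * V x)%R.
Proof.
move=> t1 K0 mh hh x.
pose r := fun y => ((h y - a) / K)%R.
have mr : measurable_fun setT r.
  by apply: measurable_funM => //; apply: measurable_funB.
have hr y : (`|r y| <= V y)%R.
  by rewrite /r normrM normfV (gtr0_norm K0) ler_pdivrMr// mulrC.
have hbr : Vb r 1 by split => // y; rewrite mul1r.
have eh : h = (fun y => a + K * r y)%R.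
  apply/funext => y; rewrite /r mulrC -mulrA mulVf ?gt_eqF// mulr1.
  by rewrite addrC subrK.
have := le_trans (@Vnorm_ub (ker_int (T t) x) (dens_int mu (pi t)) V r mr hr) (hgeo x t1).
rewrite /ker_int (ker_fin x t1 hbr) (dens_fin t hbr) -EFinB /= lee_fin => H.
rewrite eh (kR_lin _ _ _ t1 hbr) (DR_lin _ _ _ hbr).
rewrite opprD addrACA subrr add0r -mulrBr normrM (gtr0_norm K0).
by rewrite -mulrA ler_pM2l// mulrC.
Qed.

Lemma iter_Vb t n h K : (1 <= t)%N -> Vb h K ->
  Vb (iter n (kR t) h) (K * (1 + C) ^+ n).
Proof.
move=> t1 hb; elim: n => [|n IH]; first by rewrite expr0 mulr1.
by rewrite iterS exprSr mulrA; exact: Vb_kR.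
Qed.

Lemma kpow_iter t n h K : (1 <= t)%N -> Vb h K ->
  kpow (T t) n (fun y => (h y)%:E) = (fun y => (iter n (kR t) h y)%:E).
Proof.
move=> t1 hb; elim: n => [//|n IH].
rewrite /kpow iterS -/(kpow (T t) n _) IH; apply/funext => x.
by rewrite /kop (ker_fin x t1 (iter_Vb n t1 hb)).
Qed.

Lemma iter_geo t n (h : X -> R) (a K : R) : (1 <= t)%N -> (0 < K)%R ->
  measurable_fun setT h -> (forall x, `|h x - a| <= K * V x)%R ->
  (forall x, `|iter n.+1 (kR t) h x - DR t h| <= K * rho t ^+ n.+1 * V x)%R /\
  DR t (iter n.+1 (kR t) h) = DR t h.
Proof.
move=> t1 K0 mh hh.
have hb := Vb_shift (ltW K0) mh hh.
elim: n => [|n [IH1 IH2]].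
  split; first by move=> x; rewrite expr1; exact: OS.
  exact: stat_R hb.
have hbg := iter_Vb n.+1 t1 hb; case: (hbg) => _ mg _.
have /andP[r0 r1] := hrho t1.
have Kp : (0 < K * rho t ^+ n.+1)%R by rewrite mulr_gt0// exprn_gt0.
split.
  move=> x; have := OS t1 Kp mg IH1 x; rewrite IH2.
  by rewrite (iterS n.+1) [in X in _ -> X]exprSr mulrA.
by rewrite (iterS n.+1) (stat_R t1 hbg) IH2.
Qed.

Lemma msqrt (f : X -> R) : measurable_fun setT f ->
  measurable_fun setT (fun x => Num.sqrt (f x)).
Proof.
move=> mf; apply: (measurableT_comp (continuous_measurable_fun (@sqrt_continuous R)) mf).
Qed.

Lemma hellV t s : \int[mu]_x (V x * `|pi t x - pi s x|)%:E <=
  (2 * Num.sqrt C * hellinger mu (pi t) (pi s))%:E.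
Proof.
set P := pi t; set Q := pi s.
have mP : measurable_fun setT P by exact: mpi.
have mQ : measurable_fun setT Q by exact: mpi.
have P0 x : (0 <= P x)%R by exact: pi0.
have Q0 x : (0 <= Q x)%R by exact: pi0.
pose a x := ((Num.sqrt (P x) - Num.sqrt (Q x)) ^+ 2)%R.
have ma : measurable_fun setT a.
  by apply: measurable_funX; apply: measurable_funB; exact: msqrt.
have a0 x : (0 <= a x)%R by exact: sqr_ge0.
have aPQ x : (a x <= 2 * P x + 2 * Q x)%R.
  rewrite /a; have := sqrtr_ge0 (P x); have := sqrtr_ge0 (Q x).
  have eP : (P x = Num.sqrt (P x) ^+ 2)%R by rewrite sqr_sqrtr.
  have eQ : (Q x = Num.sqrt (Q x) ^+ 2)%R by rewrite sqr_sqrtr.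
  rewrite {3}eP {3}eQ; set u := Num.sqrt (P x); set w := Num.sqrt (Q x).
  move=> ? ?; nra.
have HIle : \int[mu]_x (a x)%:E <= 4%:E.
  apply: le_trans (@ge0_le_integral _ _ _ mu setT measurableT (fun x => (a x)%:E)
     (fun x => (2%:E * (P x)%:E + 2%:E * (Q x)%:E)) _ _ _ _) _.
  - by move=> x _; rewrite lee_fin.
  - exact/measurable_EFinP.
  - by apply: emeasurable_funD; apply: measurable_funeM; exact/measurable_EFinP.
  - by move=> x _; rewrite -!EFinM -EFinD lee_fin.
  rewrite integralD//; last 2 first.
  - by apply: integrableZl => //; exact: integrable_p.
  - by apply: integrableZl => //; exact: integrable_p.
  rewrite !integralZl//; try exact: integrable_p.
  by rewrite !int_pi !mule1 -EFinD lee_fin; lra.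
have HI0 : 0 <= \int[mu]_x (a x)%:E by apply: integral_ge0 => x _; rewrite lee_fin.
have HIf : \int[mu]_x (a x)%:E = (fine (\int[mu]_x (a x)%:E))%:E.
  by rewrite fineK// ge0_fin_numE// (le_lt_trans HIle)// ltry.
set h := fine (\int[mu]_x (a x)%:E) in HIf.
have h0 : (0 <= h)%R by rewrite -lee_fin -HIf.
have -> : hellinger mu P Q = Num.sqrt h by [].
pose b x := (V x ^+ 2 * P x + V x ^+ 2 * Q x)%R.
have mb : measurable_fun setT b.
  by apply: measurable_funD; apply: measurable_funM => //; exact: measurable_funX.
have b0 x : (0 <= b x)%R by rewrite addr_ge0// mulr_ge0// sqr_ge0.
have Ib : \int[mu]_x (b x)%:E <= (2 * C)%:E.
  have -> : (fun x => (b x)%:E) = (fun x => (V x ^+ 2 * P x)%:E + (V x ^+ 2 * Q x)%:E).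
    by apply/funext => x; rewrite /b EFinD.
  rewrite (@ge0_integralD _ _ _ mu setT measurableT).
  - have -> : ((2 * C)%R)%:E = C%:E + C%:E by rewrite -EFinD; congr EFin; lra.
    by apply: leeD; exact: hV2.
  - by move=> x _; rewrite lee_fin mulr_ge0// sqr_ge0.
  - by apply/measurable_EFinP; apply: measurable_funM => //; exact: measurable_funX.
  - by move=> x _; rewrite lee_fin mulr_ge0// sqr_ge0.
  - by apply/measurable_EFinP; apply: measurable_funM => //; exact: measurable_funX.
have mI : measurable_fun setT (fun x => (V x * `|P x - Q x|)%:E).
  apply/measurable_EFinP; apply: measurable_funM => //.
  by apply: measurableT_comp => //; exact: measurable_funB.
have I0 : 0 <= \int[mu]_x (V x * `|P x - Q x|)%:E.
  by apply: integral_ge0 => x _; rewrite lee_fin mulr_ge0 ?V0.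
have Il l : (0 < l)%R -> \int[mu]_x (V x * `|P x - Q x|)%:E <= (l / 2 * h + l^-1 * (2 * C))%:E.
  move=> l0.
  apply: le_trans (@ge0_le_integral _ _ _ mu setT measurableT _
     (fun x => (l / 2)%:E * (a x)%:E + l^-1%:E * (b x)%:E) _ mI _ _) _.
  - by move=> x _; rewrite lee_fin mulr_ge0 ?V0.
  - by apply: emeasurable_funD; apply: measurable_funeM; exact/measurable_EFinP.
  - by move=> x _; rewrite -!EFinM -EFinD lee_fin; exact: pw (V0 x) (P0 x) (Q0 x) l0.
  rewrite (@ge0_integralD _ _ _ mu setT measurableT); first last.
  - by apply: measurable_funeM; exact/measurable_EFinP.
  - by move=> x _; rewrite -EFinM lee_fin mulr_ge0// invr_ge0 ltW.
  - by apply: measurable_funeM; exact/measurable_EFinP.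
  - by move=> x _; rewrite -EFinM lee_fin mulr_ge0// divr_ge0// ltW.
  rewrite !ge0_integralZl_EFin//; try (by rewrite divr_ge0// ltW);
    try (by rewrite invr_ge0 ltW); try (exact/measurable_EFinP);
    try (by move=> x _; rewrite lee_fin).
  rewrite HIf EFinD !EFinM; apply: leeD => //.
  by apply: lee_wpmul2l => //; rewrite lee_fin invr_ge0 ltW.
have If : \int[mu]_x (V x * `|P x - Q x|)%:E = (fine (\int[mu]_x (V x * `|P x - Q x|)%:E))%:E.
  by rewrite fineK// ge0_fin_numE// (le_lt_trans (Il 1%R ltr01))// ltry.
rewrite If lee_fin; apply: opt => // l l0.
by rewrite -lee_fin -If; exact: Il.
Qed.

Lemma DR_diff s t r K : Vb r K ->
  (`|DR s r - DR t r| <= K * (2 * Num.sqrt C * hellinger mu (pi s) (pi t)))%R.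
Proof.
move=> hb; case: (hb) => K0 mr hr.
rewrite -lee_fin -abse_EFin EFinB -(dens_fin s hb) -(dens_fin t hb) /dens_int.
rewrite -integralB//; last 2 first.
- exact: integrable_ph hb.
- exact: integrable_ph hb.
have mD : measurable_fun setT (fun x => (r x * pi s x)%:E - (r x * pi t x)%:E).
  by apply: emeasurable_funB; apply/measurable_EFinP; apply: measurable_funM => //; exact: mpi.
apply: le_trans (le_abse_integral _ _ mD) _ => //.
apply: le_trans (@ge0_le_integral _ _ _ mu setT measurableT _
   (fun x => K%:E * (V x * `|pi s x - pi t x|)%:E) _ _ _ _) _.
- by move=> x _.
- exact: measurableT_comp.
- apply: measurable_funeM; apply/measurable_EFinP; apply: measurable_funM => //.
  by apply: measurableT_comp => //; apply: measurable_funB; exact: mpi.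
- move=> x _; rewrite -EFinB -mulrBr /= -EFinM lee_fin normrM mulrA.
  by rewrite ler_wpM2r.
rewrite ge0_integralZl_EFin//; first last.
- apply/measurable_EFinP; apply: measurable_funM => //.
  by apply: measurableT_comp => //; apply: measurable_funB; exact: mpi.
- by move=> x _; rewrite lee_fin mulr_ge0 ?V0.
by rewrite EFinM lee_wpmul2l ?lee_fin// hellV.
Qed.

Definition eps t := (rho t ^+ m t)%R.
Definition alpha t := (2 * Num.sqrt C * hellinger mu (pi t) (pi t.-1))%R.
Fixpoint B t : R := match t with 0 => 0%R | t'.+1 => (eps t'.+1 * (B t' + alpha t'.+1))%R end.

Hypothesis (hm : forall t, (1 <= t)%N -> (1 <= m t)%N).

Lemma main_ind t : forall (h : X -> R) (a K : R), (0 < K)%R -> measurable_fun setT h ->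
  (forall x, `|h x - a| <= K * V x)%R ->
  exists l : R, law_int mu (pi 0) T m t h = l%:E /\ (`|l - DR t h| <= K * B t)%R.
Proof.
elim: t => [|t IH] h a K K0 mh hh.
  have hb := Vb_shift (ltW K0) mh hh.
  exists (DR 0 h); split; last by rewrite subrr normr0 /= mulr0.
  rewrite -(dens_fin 0 hb) /law_int /dens_int /=.
  by apply: eq_integral => x _; rewrite -EFinM mulrC.
have hb := Vb_shift (ltW K0) mh hh.
have t1 : (1 <= t.+1)%N by [].
have /andP[r0 r1] := hrho t1.
move Mdef : (m t.+1) => M.
have M1 : (1 <= M)%N by rewrite -Mdef hm.
case: M M1 Mdef => [//|n] _ Mdef.
have [G1 G2] := iter_geo n t1 K0 mh hh.
set g := iter n.+1 (kR t.+1) h in G1 G2.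
have hbg : Vb g ((`|a| + K) * (1 + C) ^+ n.+1) by exact: iter_Vb.
case: (hbg) => _ mg _.
have Ke : (0 < K * eps t.+1)%R by rewrite mulr_gt0// /eps Mdef exprn_gt0.
have G1' x : (`|g x - DR t.+1 h| <= K * eps t.+1 * V x)%R by rewrite /eps Mdef.
have [l [hl1 hl2]] := IH g (DR t.+1 h) _ Ke mg G1'.
exists l; split.
  by rewrite -hl1 /law_int /= Mdef (kpow_iter n.+1 t1 hb).
pose r := fun y => (g y - DR t.+1 h)%R.
have hbr : Vb r (K * eps t.+1).
  split; [exact: ltW|by apply: measurable_funB|exact: G1'].
have eg : g = (fun y => DR t.+1 h + 1 * r y)%R.
  by apply/funext => y; rewrite mul1r /r addrC subrK.
have hd := DR_diff t.+1 t hbr.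
have : (DR t g - DR t.+1 g = DR t r - DR t.+1 r)%R.
  rewrite {1}eg (DR_lin _ _ _ hbr) {1}eg (DR_lin _ _ _ hbr).
  by rewrite !mul1r opprD addrACA subrr add0r.
rewrite G2 => ed.
have -> : (l - DR t.+1 h = (l - DR t g) + (DR t g - DR t.+1 h))%R by rewrite addrA subrK.
apply: le_trans (ler_normD _ _) _.
rewrite ed [X in (_ + X)%R]distrC.
have -> : (K * B t.+1 = K * eps t.+1 * B t + K * eps t.+1 * alpha t.+1)%R.
  by rewrite /=; ring.
exact: lerD hl2 hd.
Qed.

Lemma final t : (1 <= t)%N ->
  Vnorm (law_int mu (pi 0) T m t) (dens_int mu (pi t)) (fun _ => 1%R) <= (B t)%:E.
Proof.
move=> t1; apply: ge_ereal_sup => _ [f [mf hf] <-].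
have hf' x : (`|f x - 0| <= 1 * V x)%R by rewrite subr0 mul1r (le_trans (hf x) (hV1 x)).
have [l [hl1 hl2]] := main_ind t ltr01 mf hf'.
have hbf : Vb f 1 by split => // x; rewrite mul1r (le_trans (hf x) (hV1 x)).
by rewrite hl1 (dens_fin t hbf) -EFinB /= lee_fin -(mul1r (B t)).
Qed.

Lemma Bsum t : B t = (\sum_(1 <= s < t.+1)
           (\prod_(s <= u < t.+1) rho u ^+ m u) *
           (2 * Num.sqrt C * hellinger mu (pi s) (pi s.-1)))%R.
Proof.
elim: t => [|t IH]; first by rewrite big_geq.
rewrite [B _]/= IH (big_nat_recr t.+1)//= big_nat1.
rewrite [in RHS](@eq_big_nat _ _ _ 1 t.+1 _ (fun s => eps t.+1 * ((\prod_(s <= u < t.+1) rho u ^+ m u) *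
           (2 * Num.sqrt C * hellinger mu (pi s) (pi s.-1))))%R); last first.
  move=> s /andP[s1 st]; rewrite (big_nat_recr t.+1) /=; last by apply: ltnW.
  by rewrite /eps; ring.
by rewrite -mulr_sumr /alpha /eps mulrDr.
Qed.
End main.

Unset Implicit Arguments.

Theorem theorem4 (R : realType) (d : nat) (hd : (1 <= d)%N)
  (mu : {measure set (d.-tuple R) -> \bar R}) (hmu : is_lebesgue mu)
  (pi : nat -> d.-tuple R -> R) (hpi : forall t, is_density mu (pi t))
  (T : nat -> R.-pker (d.-tuple R) ~> (d.-tuple R))
  (hstat : forall t, (1 <= t)%N -> stationary mu (T t) (pi t))
  (m : nat -> nat) (hm : forall t, (1 <= t)%N -> (1 <= m t)%N)
  (V : d.-tuple R -> R) (hVm : measurable_fun setT V) (hV1 : forall x, 1 <= V x)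
  (C : R) (hC : 0 < C)
  (rho : nat -> R) (hrho : forall t, (1 <= t)%N -> 0 < rho t < 1)
  (hV2 : forall t, (\int[mu]_x ((V x ^+ 2 * pi t x)%:E) <= C%:E)%E)
  (hgeo : forall t x, (1 <= t)%N ->
     (Vnorm (ker_int (T t) x) (dens_int mu (pi t)) V <= (V x * rho t)%:E)%E) :
  forall t, (1 <= t)%N ->
    (Vnorm (law_int mu (pi 0%N) T m t) (dens_int mu (pi t)) (fun _ => 1%R)
     <= ((\sum_(1 <= s < t.+1)
           (\prod_(s <= u < t.+1) rho u ^+ m u) *
           (2 * Num.sqrt C * hellinger mu (pi s) (pi s.-1)))%R)%:E)%E.
move=> t t1.
rewrite -(Bsum mu pi m C rho t).
exact: (final hpi hstat hVm hV1 hC hrho hV2 hgeo hm t1).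
Qed.
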